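(* Let $q\ge1$ be an integer. Let $T_{q+2}'=\sum_{i,j,k\in\{0,\dots,q+1\},\ i+j+k\equiv q+1 \pmod{q+2}} x_iy_jz_k$ (the structural tensor of $\mathbb Z_{q+2}$ after renaming each $z_k$ as $z_{(k-1)\bmod (q+2)}$), and let $$CW_q=x_0y_0z_{q+1}+x_0y_{q+1}z_0+x_{q+1}y_0z_0+\sum_{k=1}^q\left(x_0y_kz_{q+1-k}+x_ky_0z_{q+1-k}+x_ky_{q+1-k}z_0\right).$$ Then $CW_q$ is a monomial degeneration of $T'_{q+2}$.
   Context: Tensors are trilinear forms in variables $x_0,\dots,x_{q+1}$, $y_0,\dots,y_{q+1}$, $z_0,\dots,z_{q+1}$ with field coefficients; both tensors above have all listed coefficients equal to $1$. For tensors $A,B$ over the same variable sets, $A$ is a monomial degeneration of $B$ if every coefficient of $A$ is either the corresponding coefficient of $B$ or $0$, and there are functions $a,b,c$ from the $x$-, $y$-, $z$-variables respectively to $\mathbb Z$ such that for every term $x_iy_jz_k$ with nonzero coefficient in $B$ we have $a(x_i)+b(y_j)+c(z_k)\ge0$, with equality if and only if the coefficient of $x_iy_jz_k$ in $A$ is nonzero. *)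

(* Defs.v *)
From mathcomp Require Import all_boot all_order all_algebra.
Set Implicit Arguments. Unset Strict Implicit. Unset Printing Implicit Defensive.
Import Order.TTheory GRing.Theory Num.Theory.
Local Open Scope ring_scope.

(* A tensor over variables x_0..x_{n-1}, y_0..y_{n-1}, z_0..z_{n-1}:
   T i j k is the coefficient of x_i y_j z_k. *)
Definition tensor (F : fieldType) (n : nat) := 'I_n -> 'I_n -> 'I_n -> F.

Definition monomial_degeneration (F : fieldType) (n : nat) (A B : tensor F n) : Prop :=
  (forall i j k, A i j k = B i j k \/ A i j k = 0) /\
  exists (a b c : 'I_n -> int),
    forall i j k, B i j k != 0 ->
      (0 <= a i + b j + c k) /\ ((a i + b j + c k == 0) = (A i j k != 0)).

Definition Tprime (F : fieldType) (q : nat) : tensor F q.+2 :=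
  fun i j k => if ((i + j + k) %% q.+2 == q.+1 %% q.+2)%N then 1 else 0.

Definition cw_supp (q i j k : nat) : bool :=
  [|| [&& i == 0, j == 0 & k == q.+1],
      [&& i == 0, j == q.+1 & k == 0],
      [&& i == q.+1, j == 0 & k == 0] |
      has (fun t => [|| [&& i == 0, j == t & k == q.+1 - t],
                        [&& i == t, j == 0 & k == q.+1 - t] |
                        [&& i == t, j == q.+1 - t & k == 0]]) (iota 1 q)]%N.

Definition CW (F : fieldType) (q : nat) : tensor F q.+2 :=
  fun i j k => if cw_supp q i j k then 1 else 0.

(* Main.v *)
Require Import Defs.
From mathcomp Require Import all_boot all_order all_algebra zify.
Import GRing.Theory Num.Theory.

Lemma cw_char q i j k : (i <= q.+1)%N -> (j <= q.+1)%N -> (k <= q.+1)%N ->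
  cw_supp q i j k = ((i+j+k == q.+1) && [|| i==0, j==0 | k==0])%N.
Proof.
move=> hi hj hk; rewrite /cw_supp; apply/idP/idP.
- case/or4P.
  + case/and3P=> /eqP-> /eqP-> /eqP->; apply/andP; split; rewrite ?eqxx ?orbT //; apply/eqP; lia.
  + case/and3P=> /eqP-> /eqP-> /eqP->; apply/andP; split; rewrite ?eqxx ?orbT //; apply/eqP; lia.
  + case/and3P=> /eqP-> /eqP-> /eqP->; apply/andP; split; rewrite ?eqxx ?orbT //; apply/eqP; lia.
  + case/hasP=> t; rewrite mem_iota => /andP[t1 t2].
    move=> /= /or3P [] /and3P[/eqP-> /eqP-> /eqP->]; apply/andP; split; rewrite ?eqxx ?orbT //; apply/eqP; lia.
- case/andP=> /eqP hs hz.
  have E : forall a b c : nat, a = b -> c = c -> (a == b) && (c == c) = true.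
    by move=> a0 b0 c0 -> _; rewrite !eqxx.
  case: (posnP i) => [i0|ip]; [|case: (posnP j) => [j0|jp]; [|case: (posnP k)=> [k0|kp]]].
  + case: (posnP j) => [j0|jp].
      apply/or4P; apply: Or41; apply/and3P; split; apply/eqP; lia.
    case: (posnP k) => [k0|kp].
      apply/or4P; apply: Or42; apply/and3P; split; apply/eqP; lia.
    apply/or4P; apply: Or44; apply/hasP; exists j; first by rewrite mem_iota; lia.
    apply/or3P; apply: Or31; apply/and3P; split; apply/eqP; lia.
  + case: (posnP k) => [k0|kp].
      apply/or4P; apply: Or43; apply/and3P; split; apply/eqP; lia.
    apply/or4P; apply: Or44; apply/hasP; exists i; first by rewrite mem_iota; lia.
    apply/or3P; apply: Or32; apply/and3P; split; apply/eqP; lia.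
  + apply/or4P; apply: Or44; apply/hasP; exists i; first by rewrite mem_iota; lia.
    apply/or3P; apply: Or33; apply/and3P; split; apply/eqP; lia.
  + by move: hz; rewrite !eqn0Ngt ip jp kp.
Qed.

Lemma modcase q (s : nat) : (s <= 3 * q.+1)%N ->
  ((s %% q.+2 == q.+1 %% q.+2)%N = ((s == q.+1) || (s == 2*q + 3)))%N.
Proof.
move=> hs; rewrite (modn_small (ltnSn q.+1)).
have e := divn_eq s q.+2.
have : (s %/ q.+2 < 3)%N by rewrite ltn_divLR //; lia.
have := ltn_pmod s (isT : (0 < q.+2)%N).
move: e; set r := s %% q.+2; case: (s %/ q.+2) => [|[|[|n]]] e hm hd //; rewrite e;
apply/idP/idP; lia.
Qed.

Theorem mainTheorem5 (F : fieldType) (q : nat) (hq : (1 <= q)%N) :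
  monomial_degeneration (@CW F q) (@Tprime F q).
Proof.
have bd := fun (i : 'I_q.+2) => (ltn_ord i : (i <= q.+1)%N).
split.
  move=> i j k; rewrite /CW /Tprime; case: ifP => h; [left|by right].
  rewrite (cw_char q i j k (bd i) (bd j) (bd k)) in h; case/andP: h => /eqP -> _.
  by rewrite eqxx.
pose h (i : nat) : nat := ((i != 0%N) + (i == q.+1))%N.
exists (fun i => Posz (i + h i)%N), (fun i => Posz (i + h i)%N),
  (fun i => (Posz (i + h i)%N - Posz (q + 3)%N)%R).
move=> i j k; rewrite /Tprime /CW; case: ifP => hT; last by rewrite eqxx.
move=> _; rewrite modcase in hT; last by have := bd i; have := bd j; have := bd k; lia.
rewrite (cw_char q i j k (bd i) (bd j) (bd k)).
rewrite addrA -!PoszD subr_ge0 lez_nat subr_eq0 eqz_nat.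
have := bd i; have := bd j; have := bd k.
move: hT; move: (nat_of_ord i) (nat_of_ord j) (nat_of_ord k) => x y z.
move=> hT hz hy hx.
have cs : forall x, (x <= q.+1)%N -> (x = 0 /\ h x = 0)%N \/ ((0 < x <= q) /\ h x = 1)%N \/ (x = q.+1 /\ h x = 2)%N.
  move=> w hw; rewrite /h; case: (posnP w) => [->|wp]; first by left.
  case: (w =P q.+1) => [->|/eqP wq]; first by right; right; split=> //; rewrite /= eqnE eqxx.
  right; left; split=> //=; lia.
case: ifP => hc; rewrite ?oner_neq0 ?eqxx /=; move: hT hc;
(case: (cs x hx) => [[-> ->]|[[/andP[x1 x2] ->]|[-> ->]]]);
(case: (cs y hy) => [[-> ->]|[[/andP[y1 y2] ->]|[-> ->]]]);
(case: (cs z hz) => [[-> ->]|[[/andP[z1 z2] ->]|[-> ->]]]);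
lia.
Qed.
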